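(* Let $S:\mathbb{R}^m\times\mathbb{R}^n\to\mathbb{R}^q$ be bilinear with lifted operator $\mathscr{S}$, let $\mathcal{K}'\subseteq\mathbb{R}^{m\times n}$ and $\mathcal{M}=\mathcal{K}'-\mathcal{K}'$. Let $X\in\mathcal{N}(\mathscr{S},2)\cap\mathcal{M}\setminus\{0\}$ be a given matrix and $\delta\in(0,1)$. Let $\mathbf{M}=xy^T=\sigma uv^T$ be a random rank one matrix with $u=x/\|x\|_2$, $v=y/\|y\|_2$, where $x\in\mathbb{R}^m,y\in\mathbb{R}^n$ satisfy: (A1) $x$ and $y$ each have zero mean and identity covariance; (A2) $x$ and $y$ are independent; and $\|x\|_2\ge r_x$ a.s. and $\|y\|_2\ge r_y$ a.s. for constants $r_x,r_y>0$. Then $\Pr(\|P_{\mathcal{C}(X)}u\|_2^2\ge1-\delta)\le\frac{2}{r_x^2(1-\delta)}$ and $\Pr(\|P_{\mathcal{R}(X)}v\|_2^2\ge1-\delta)\le\frac{2}{r_y^2(1-\delta)}$.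
   Context: For $j=1,\dots,q$ let $S_j$ be the unique matrix with $(S(x,y))_j=x^TS_jy$; the lifted operator is $(\mathscr{S}(W))_j=\operatorname{tr}(S_j^TW)$. $\mathcal{N}(\mathscr{S},k)=\{X:\operatorname{rank}(X)\le k,\ \mathscr{S}(X)=0\}$; $\mathcal{K}'-\mathcal{K}'=\{X_1-X_2:X_1,X_2\in\mathcal{K}'\}$. $\mathcal{C}(X)$, $\mathcal{R}(X)$ are column and row spaces; $P_{\mathcal{V}}$ is orthogonal projection onto $\mathcal{V}$. *)

(* Defs.v *)
From HB Require Import structures.
From mathcomp Require Import all_boot all_order all_algebra.
From mathcomp Require Import all_classical all_reals all_analysis.
Set Implicit Arguments. Unset Strict Implicit. Unset Printing Implicit Defensive.
Import Order.TTheory GRing.Theory Num.Theory.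
Local Open Scope ring_scope.
Local Open Scope classical_set_scope.

Definition bilinear_map (R : ringType) m n q
  (S : 'cV[R]_m -> 'cV[R]_n -> 'cV[R]_q) : Prop :=
  (forall y, linear (S^~ y)) /\ (forall x, linear (S x)).

(* S_j : the unique matrix with (S(x,y))_j = x^T S_j y,
   i.e. (S_j)_{ab} = (S(e_a, e_b))_j. *)
Definition Smat (R : ringType) m n q
  (S : 'cV[R]_m -> 'cV[R]_n -> 'cV[R]_q) (j : 'I_q) : 'M[R]_(m, n) :=
  \matrix_(a, b) S (delta_mx a 0) (delta_mx b 0) j 0.

Definition lifted (R : ringType) m n q
  (S : 'cV[R]_m -> 'cV[R]_n -> 'cV[R]_q) (W : 'M[R]_(m, n)) : 'cV[R]_q :=
  \col_j \tr ((Smat S j)^T *m W).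

Definition Nset (R : fieldType) m n q
  (S : 'cV[R]_m -> 'cV[R]_n -> 'cV[R]_q) (k : nat) : set 'M[R]_(m, n) :=
  [set X | (\rank X <= k)%N /\ lifted S X = 0].

Definition diffset (R : ringType) m n (K : set 'M[R]_(m, n)) : set 'M[R]_(m, n) :=
  [set X | exists X1 X2, K X1 /\ K X2 /\ X = X1 - X2].

(* P is the orthogonal projection matrix onto the column space C(A) of
   A : 'M_(p, k) (a subspace of R^p): P symmetric, idempotent, with the
   same column space as A (column spaces compared as row spaces of
   transposes). *)
Definition orth_proj_col (R : fieldType) p k (A : 'M[R]_(p, k)) (P : 'M[R]_p) : Prop :=
  P^T = P /\ P *m P = P /\ (P^T == A^T)%MS.

Definition orth_proj_row (R : fieldType) m n (X : 'M[R]_(m, n)) (P : 'M[R]_n) : Prop :=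
  orth_proj_col X^T P.

Definition sqnorm (R : realType) p (v : 'cV[R]_p) : R := \sum_i v i 0 ^+ 2.
Definition norm2 (R : realType) p (v : 'cV[R]_p) : R := Num.sqrt (sqnorm v).

Definition rvec {d} {T : measurableType d} {R : realType} (P : probability T R) p :=
  'I_p -> {RV P >-> R}.

Definition rvec_at {d} {T : measurableType d} {R : realType} (P : probability T R) p
  (x : rvec P p) (w : T) : 'cV[R]_p := \col_i x i w.

Definition zero_mean_id_cov {d} {T : measurableType d} {R : realType}
  (P : probability T R) p (x : rvec P p) : Prop :=
  (forall i, (x i : T -> R) \in Lfun P 2%:E) /\
  (forall i, 'E_P[x i]%E = 0%E) /\
  (forall i j, covariance P (x i) (x j) = (i == j)%:R%:E).

Definition sigma_rvec {d} {T : measurableType d} {R : realType}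
  (P : probability T R) p (x : rvec P p) : set (set T) :=
  <<s [set E | exists i (B : set R), measurable B /\ E = (x i) @^-1` B] >>.

Definition indep_rvec {d} {T : measurableType d} {R : realType}
  (P : probability T R) p k (x : rvec P p) (y : rvec P k) : Prop :=
  forall E F, sigma_rvec x E -> sigma_rvec y F -> P (E `&` F) = (P E * P F)%E.

(* Main.v *)
Require Import Defs.
From HB Require Import structures.
From mathcomp Require Import all_boot all_order all_algebra.
From mathcomp Require Import all_classical all_reals all_analysis.
From mathcomp Require Import ring lra.
Import Order.TTheory GRing.Theory Num.Theory.
Local Open Scope ring_scope.
Local Open Scope classical_set_scope.
Lemma tr_idem (F : fieldType) p (Q : 'M[F]_p) : Q *m Q = Q -> \tr Q = (\rank Q)%:R.
Proof.
move=> QQ.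
have BC : row_base Q *m col_base Q = 1%:M.
  apply: (row_full_inj (col_base_full Q)).
  apply: (row_free_inj (row_base_free Q)).
  rewrite mulmx1 mulmx_base mulmxA mulmx_base -mulmxA mulmx_base.
  exact QQ.
by rewrite -{1}(mulmx_base Q) mxtrace_mulC BC mxtrace1.
Qed.

Lemma sqnorm_proj (R : realType) p (Q : 'M[R]_p) (z : 'cV[R]_p) : Q^T = Q -> Q *m Q = Q ->
  sqnorm (Q *m z) = \sum_j \sum_k Q j k * (z j 0 * z k 0).
Proof.
move=> QT QQ; rewrite /sqnorm.
transitivity (\sum_i \sum_j \sum_k Q i j * Q i k * (z j 0 * z k 0)).
  apply: eq_bigr => i _; rewrite mxE expr2 mulr_suml; apply: eq_bigr => j _.
  rewrite mulr_sumr; apply: eq_bigr => k _; ring.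
rewrite exchange_big; apply: eq_bigr => j _.
rewrite exchange_big; apply: eq_bigr => k _.
rewrite -mulr_suml; congr (_ * _); rewrite -[in RHS]QQ mxE; apply: eq_bigr => i _.
by rewrite -{1}QT mxE.
Qed.

Section E.
Context d (T : measurableType d) (R : realType) (P : probability T R).

Lemma E_sum (I : Type) (s : seq I) (F : I -> T -> R) : (forall i, F i \in Lfun P 1) ->
  ('E_P[fun w => (\sum_(i <- s) F i w)%R] = \sum_(i <- s) 'E_P[F i])%E /\
  (fun w => \sum_(i <- s) F i w) \in Lfun P 1.
Proof.
move=> HF; elim: s => [|a s [IH1 IH2]].
  rewrite (_ : (fun w => _) = cst 0); last by apply/funext => w; rewrite big_nil.
  by rewrite expectation_cst big_nil; split => //; apply: Lfun_cst.
rewrite (_ : (fun w => _) = F a \+ (fun w => \sum_(i <- s) F i w)); last first.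
  by apply/funext => w; rewrite big_cons.
rewrite expectationD // big_cons IH1; split => //.
by apply: rpredD.
Qed.

Lemma L2L1 (f : T -> R) : f \in Lfun P 2%:E -> f \in Lfun P 1.
Proof. apply: Lfun_subset12. exact: fin_num_measure. Qed.

Lemma Eform p (xs : rvec P p) (Q : 'M[R]_p) :
  zero_mean_id_cov xs ->
  ('E_P[fun w => (\sum_j \sum_k xs j w * xs k w * Q j k)%R] = (\tr Q)%:E)%E.
Proof.
move=> [L2 [E0 Cov]].
have Lprod j k : (fun w => xs j w * xs k w) \in Lfun P 1.
  exact: Lfun2_mul_Lfun1 (L2 j) (L2 k).
have Lterm j k : (fun w => xs j w * xs k w * Q j k) \in Lfun P 1.
  change (Q j k \o* (fun w => xs j w * xs k w) \in Lfun P 1); by rewrite Lfun_scale.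
have Eprod j k : ('E_P[fun w => (xs j w * xs k w)%R] = (j == k)%:R%:E)%E.
  have := Cov j k; rewrite covarianceE ?E0 ?mule0 ?sube0 //; first [exact: L2L1 | exact: Lprod].
have [-> _] := E_sum _ (index_enum 'I_p) (fun j w => \sum_k xs j w * xs k w * Q j k)
  (fun j => (E_sum _ (index_enum 'I_p) (fun k w => xs j w * xs k w * Q j k) (Lterm j)).2).
rewrite /mxtrace -sumEFin; apply: eq_bigr => j _.
have [-> _] := E_sum _ (index_enum 'I_p) (fun k w => xs j w * xs k w * Q j k) (Lterm j).
rewrite (bigD1 j) //= big1 ?adde0.
  by rewrite expectationZl // Eprod eqxx mule1.
move=> k kj; rewrite expectationZl // Eprod eq_sym (negbTE kj) /= mule0 //.
Qed.
End E.

Lemma sqnorm_ge0 (R : realType) p (v : 'cV[R]_p) : 0 <= sqnorm v.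
Proof. by apply: sumr_ge0 => i _; exact: sqr_ge0. Qed.

Lemma sqnormZ (R : realType) p (c : R) (v : 'cV[R]_p) : sqnorm (c *: v) = c ^+ 2 * sqnorm v.
Proof. by rewrite /sqnorm mulr_sumr; apply: eq_bigr => i _; rewrite mxE exprMn. Qed.

Section M.
Context d (T : measurableType d) (R : realType) (P : probability T R).

Lemma main_bound p (xs : rvec P p) (Q : 'M[R]_p) (rx delta : R) :
  0 < rx -> 0 < delta -> delta < 1 ->
  (forall w, sqnorm (Q *m rvec_at xs w) = \sum_j \sum_k xs j w * xs k w * Q j k) ->
  ('E_P[fun w => (\sum_j \sum_k xs j w * xs k w * Q j k)%R] <= 2%:E)%E ->
  {ae P, forall w, rx <= norm2 (rvec_at xs w)} ->
  (P [set w | (1 - delta <= sqnorm (Q *m ((norm2 (rvec_at xs w))^-1 *: rvec_at xs w)))%R]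
     <= (2 / (rx ^+ 2 * (1 - delta)))%:E)%E.
Proof.
move=> rx0 d0 d1 gE Eg [N [mN PN0 HN]].
set s := fun w => sqnorm (rvec_at xs w).
set g := fun w => sqnorm (Q *m rvec_at xs w).
have mxs i : measurable_fun setT (xs i) by exact: measurable_funP.
have mg : measurable_fun setT g.
  rewrite (_ : g = fun w => \sum_j \sum_k xs j w * xs k w * Q j k); last first.
    by apply/funext => w; rewrite /g gE.
  apply: measurable_sum => j; apply: measurable_sum => k.
  by apply: measurable_realfun.measurable_funM; [apply: measurable_realfun.measurable_funM|apply: measurable_cst].
have ms : measurable_fun setT s.
  rewrite (_ : s = fun w => \sum_i xs i w ^+ 2); last first.
    by apply/funext => w; rewrite /s /sqnorm; apply: eq_bigr => i _; rewrite mxE.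
  by apply: measurable_sum => i; apply: measurable_realfun.measurable_funX.
set eps := rx ^+ 2 * (1 - delta).
have eps0 : 0 < eps by rewrite /eps mulr_gt0 ?exprn_gt0 // subr_gt0.
set A := [set w | _].
have Aeq : A = ([set: T] `&` [set w | (0%:E < (EFin \o s) w)%E]) `&`
               ([set: T] `&` [set w | (1 - delta) * s w <= g w]).
  apply/seteqP; split => w /=.
    rewrite /A /= -scalemxAr sqnormZ /norm2 exprVn sqr_sqrtr ?sqnorm_ge0 // -/(s w) -/(g w).
    have [s0|] := ltP 0 (s w).
      by rewrite mulrC ler_pdivlMr // mulrC lte_fin => H; split; split.
    move=> sle; have -> : s w = 0 by apply/le_anti; rewrite sle sqnorm_ge0.
    by rewrite invr0 mul0r subr_le0 leNgt d1.
  move=> [[_ /=]]; rewrite lte_fin => s0 [_ /=] H.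
  rewrite /A /= -scalemxAr sqnormZ /norm2 exprVn sqr_sqrtr ?sqnorm_ge0 // -/(s w) -/(g w).
  by rewrite mulrC ler_pdivlMr // mulrC.
have mA : measurable A.
  rewrite Aeq; apply: measurableI.
    apply: measurable_lte => //.
    exact/measurable_realfun.measurable_EFinP.
  apply: measurable_fun_le => //.
  by apply: measurable_realfun.measurable_funM => //; apply: measurable_cst.
pose G : {RV P >-> R} := mfun_Sub (f := g) (mem_set mg).
set B := [set w | (eps%:E <= `|((G : T -> R) w)%:E|)%E].
have mB : measurable B.
  have -> : B = [set: T] `&` [set w | eps <= g w].
    apply/seteqP; split => w; rewrite /B /= ?abse_EFin lee_fin ger0_norm ?sqnorm_ge0 //.
    by move=> [] _.
  apply: measurable_fun_le => //; exact: measurable_cst.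
have AB : A `<=` N `|` B.
  move=> w Aw; have [Nw|nNw] := pselect (N w); [by left|right].
  have rxw : rx <= norm2 (rvec_at xs w).
    apply: contrapT => H; apply: nNw; apply: HN; exact: H.
  rewrite /B /= ?abse_EFin lee_fin ger0_norm ?sqnorm_ge0 //.
  move: Aw; rewrite Aeq => -[[_ /=]]; rewrite lte_fin => s0 [_ /=] H.
  have rs : rx ^+ 2 <= s w.
    have e : norm2 (rvec_at xs w) ^+ 2 = s w by rewrite /norm2 sqr_sqrtr // sqnorm_ge0.
    rewrite -e; move: rxw; set t := norm2 _ => rxw; nra.
  apply: le_trans H; rewrite /eps; nra.
have markov1 := @markov _ _ _ P G id eps eps0 (@measurable_id _ _ setT)
  (fun r r0 => r0) (fun a _ b _ ab => ab).
have EG : ('E_P[(id \o Num.norm) \o (G : T -> R)] = 'E_P[fun w => (\sum_j \sum_k xs j w * xs k w * Q j k)%R])%E.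
  congr ('E_P[_])%E; apply/funext => w /=.
  by rewrite ger0_norm; [exact: gE | exact: sqnorm_ge0].
rewrite EG in markov1.
have PBf : P B \is a fin_num by apply: fin_num_measure.
have PBle : (P B <= (2 / eps)%:E)%E.
  rewrite -(fineK PBf) lee_fin ler_pdivlMr // mulrC -lee_fin EFinM (fineK PBf).
  exact: le_trans markov1 Eg.
apply: le_trans PBle.
apply: (le_trans (le_measure _ _ _ AB)); rewrite ?inE //; first exact: measurableU.
apply: (le_trans (measureU2 _ mN mB)).
have H0 (a b : \bar R) : a = 0%E -> (a + b <= b)%E by move=> ->; rewrite add0e.
exact: H0 PN0.
Qed.
End M.

Lemma sqnorm_proj' (R : realType) p (Q : 'M[R]_p) (z : 'cV[R]_p) : Q^T = Q -> Q *m Q = Q ->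
  sqnorm (Q *m z) = \sum_j \sum_k z j 0 * z k 0 * Q j k.
Proof.
move=> QT QQ; rewrite sqnorm_proj //; apply: eq_bigr => j _; apply: eq_bigr => k _.
by rewrite mulrC.
Qed.

Lemma proj_bound d (T : measurableType d) (R : realType) (P : probability T R)
  p k (A : 'M[R]_(p, k)) (xs : rvec P p) (Q : 'M[R]_p) (rx delta : R) :
  0 < rx -> 0 < delta -> delta < 1 -> zero_mean_id_cov xs ->
  orth_proj_col A Q -> (\rank A <= 2)%N ->
  {ae P, forall w, rx <= norm2 (rvec_at xs w)} ->
  (P [set w | (1 - delta <= sqnorm (Q *m ((norm2 (rvec_at xs w))^-1 *: rvec_at xs w)))%R]
     <= (2 / (rx ^+ 2 * (1 - delta)))%:E)%E.
Proof.
move=> rx0 d0 d1 Hx [QT [QQ eqm]] rA Hae.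
apply: main_bound => //.
  by move=> w; rewrite sqnorm_proj' //; apply: eq_bigr => j _; apply: eq_bigr => l _; rewrite !mxE.
rewrite Eform // tr_idem // lee_fin.
have -> : \rank Q = \rank A by rewrite -(mxrank_tr Q) (eqmx_rank eqm) mxrank_tr.
by rewrite ler_nat.
Qed.

Theorem lemma2 (R : realType) (m n q : nat)
  (S : 'cV[R]_m -> 'cV[R]_n -> 'cV[R]_q) (HS : bilinear_map S)
  (K' : set 'M[R]_(m, n))
  (X : 'M[R]_(m, n))
  (HX : (Nset S 2 `&` diffset K') X) (HX0 : X != 0)
  (delta : R) (Hd0 : 0 < delta) (Hd1 : delta < 1)
  (d : measure_display) (T : measurableType d) (P : probability T R)
  (x : rvec P m) (y : rvec P n)
  (Hx : zero_mean_id_cov x) (Hy : zero_mean_id_cov y)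
  (Hxy : indep_rvec x y)
  (rx ry : R) (Hrx : 0 < rx) (Hry : 0 < ry)
  (Hxr : {ae P, forall w, rx <= norm2 (rvec_at x w)})
  (Hyr : {ae P, forall w, ry <= norm2 (rvec_at y w)})
  (PC : 'M[R]_m) (HPC : orth_proj_col X PC)
  (PR : 'M[R]_n) (HPR : orth_proj_row X PR) :
  let u := fun w => (norm2 (rvec_at x w))^-1 *: rvec_at x w in
  let v := fun w => (norm2 (rvec_at y w))^-1 *: rvec_at y w in
  (P [set w | (1 - delta <= sqnorm (PC *m u w))%R] <= (2 / (rx ^+ 2 * (1 - delta)))%:E)%E /\
  (P [set w | (1 - delta <= sqnorm (PR *m v w))%R] <= (2 / (ry ^+ 2 * (1 - delta)))%:E)%E.
Proof.
move=> u v; rewrite /u /v.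
have rX : (\rank X <= 2)%N by case: HX => -[].
split.
  exact: (@proj_bound _ _ _ _ _ _ _ _ _ _ _ Hrx Hd0 Hd1 Hx HPC rX Hxr).
by apply: (@proj_bound _ _ _ _ _ _ _ _ _ _ _ Hry Hd0 Hd1 Hy HPR _ Hyr); rewrite mxrank_tr.
Qed.
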